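(* Let $n\ge3$, $m_1,\dots,m_n>0$, and let $\varphi_1,\dots,\varphi_n$ be the longitudes of a fixed-point configuration of the masses on the equator. Let $H,G$ be the $n\times n$ matrices with entries (for $i\ne j$) $H_{ij}=\frac{m_im_j}{\sin^3d_{ij}}$, $H_{ii}=-\sum_{j\neq i}H_{ij}\cos d_{ij}$, $G_{ij}=\frac{-2m_im_j\cos d_{ij}}{\sin^3 d_{ij}}$, $G_{ii}=-\sum_{j\neq i}G_{ij}$, and let $v_1,v_2,v_3\in\mathbb R^n$ have entries $(v_1)_i=\cos d_{1i}=\cos(\varphi_i-\varphi_1)$, $(v_2)_i=\sin(\varphi_i-\varphi_1)$, $(v_3)_i=1$ (with $d_{11}=0$). Then $Hv_1=0$, $Hv_2=0$ and $Gv_3=0$.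
   Context: Masses lie on the equator of the unit sphere at longitudes $\varphi_i$, with geodesic distances $d_{ij}\in(0,\pi)$ for $i\ne j$ (on the equator $\cos d_{ij}=\cos(\varphi_i-\varphi_j)$). The force function is $V=\sum_{i<j}m_im_j\cot d_{ij}$, and a fixed point is a critical point of $V$ on the configuration space $\{d_{ij}\notin\{0,\pi\}\}\subset(\mathbb S^2)^n$. (The matrices $H$ and $G$ are the Hessians of $V$ with respect to the colatitudes $\theta_i$ and to the longitudes $\varphi_i$ at the configuration.) *)

(* Defs.v *)
From Stdlib Require Import Reals Lra List.
From Coquelicot Require Import Coquelicot.
Open Scope R_scope.

(* Finite sum over indices 0 .. n-1 (masses are indexed 0 .. n-1). *)
Definition rsum (n : nat) (f : nat -> R) : R :=
  fold_right Rplus 0 (map f (seq 0 n)).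

Definition cot (x : R) : R := cos x / sin x.

Definition upd (f : nat -> R) (k : nat) (t : R) : nat -> R :=
  fun i => if Nat.eqb i k then t else f i.

(* Cosine of the geodesic distance between points of the unit sphere given
   in spherical coordinates (colatitude th, longitude ph). *)
Definition cosdist (th ph : nat -> R) (i j : nat) : R :=
  cos (th i) * cos (th j) + sin (th i) * sin (th j) * cos (ph i - ph j).

Definition dist (th ph : nat -> R) (i j : nat) : R := acos (cosdist th ph i j).

Definition Vforce (n : nat) (m th ph : nat -> R) : R :=
  rsum n (fun j => rsum j (fun i => m i * m j * cot (dist th ph i j))).

Definition in_config (n : nat) (th ph : nat -> R) : Prop :=
  forall i j, (i < n)%nat -> (j < n)%nat -> i <> j ->
    0 < dist th ph i j < PI.

Definition fixed_point (n : nat) (m th ph : nat -> R) : Prop :=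
  in_config n th ph /\
  forall k, (k < n)%nat ->
    is_derive (fun t => Vforce n m (upd th k t) ph) (th k) 0 /\
    is_derive (fun t => Vforce n m th (upd ph k t)) (ph k) 0.

Definition equator : nat -> R := fun _ => PI / 2.

Definition deq (ph : nat -> R) (i j : nat) : R := acos (cos (ph i - ph j)).

Definition Hoff (m ph : nat -> R) (i j : nat) : R :=
  m i * m j / (sin (deq ph i j)) ^ 3.
Definition Hmat (n : nat) (m ph : nat -> R) (i j : nat) : R :=
  if Nat.eqb i j then
    - rsum n (fun k => if Nat.eqb k i then 0 else Hoff m ph i k * cos (deq ph i k))
  else Hoff m ph i j.

Definition Goff (m ph : nat -> R) (i j : nat) : R :=
  -2 * m i * m j * cos (deq ph i j) / (sin (deq ph i j)) ^ 3.
Definition Gmat (n : nat) (m ph : nat -> R) (i j : nat) : R :=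
  if Nat.eqb i j then
    - rsum n (fun k => if Nat.eqb k i then 0 else Goff m ph i k)
  else Goff m ph i j.

(* Vectors v1, v2, v3 (index 0 plays the role of mass 1). *)
Definition v1 (ph : nat -> R) (i : nat) : R := cos (deq ph 0%nat i).
Definition v2 (ph : nat -> R) (i : nat) : R := sin (ph i - ph 0%nat).
Definition v3 (i : nat) : R := 1.

Definition mulv (n : nat) (M : nat -> nat -> R) (v : nat -> R) (i : nat) : R :=
  rsum n (fun j => M i j * v j).

(* Main.v *)
Require Import Defs.
From Stdlib Require Import Reals.
From Coquelicot Require Import Coquelicot.
From Stdlib Require Import Lra Lia List Arith.
Open Scope R_scope.

Lemma L (u : R -> R) x u' : is_derive u x u' -> 0 < 1 - cos (u x)^2 ->
  is_derive (fun t => cot (acos (cos (u t)))) x (- sin (u x) * u' / sin (acos (cos (u x)))^3).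
Proof.
  intros Hu Hp.
  apply is_derive_ext with (f := fun t => cos (u t) / sqrt (1 - cos (u t)^2)).
  { intros t. unfold cot. rewrite cos_acos, sin_acos by apply COS_bound.
    unfold Rsqr. f_equal. f_equal. ring. }
  rewrite sin_acos by apply COS_bound.
  assert (Hd : Derive u x = u') by (apply is_derive_unique; auto).
  assert (E : 1 + - (cos (u x) * (cos (u x) * 1)) = 1 - cos (u x)^2) by ring.
  assert (Hs : 0 < sqrt (1 - cos (u x)^2)) by (apply sqrt_lt_R0; auto).
  assert (Hss : sqrt (1 - cos (u x)^2) * sqrt (1 - cos (u x)^2) = 1 - cos (u x)^2)
    by (apply sqrt_sqrt; lra).
  auto_derive.
  - rewrite E. repeat split; try (exists u'; exact Hu); lra.
  - change (fun x0 : R => u x0) with u. rewrite Hd, E.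
    replace ((cos (u x))²) with (cos (u x)^2) by (unfold Rsqr; ring).
    set (s := sqrt (1 - cos (u x)^2)) in *.
    set (c := cos (u x)) in *.
    apply Rminus_diag_uniq.
    field_simplify; [| lra ..].
    replace (s^2) with (s*s) by ring. rewrite Hss.
    field_simplify; [| lra ..].
    unfold Rdiv; ring.
Qed.

Lemma rsum_S n f : rsum (S n) f = rsum n f + f n.
Proof.
  unfold rsum. rewrite seq_S, map_app, fold_right_app. simpl.
  generalize (map f (seq 0 n)). intros l. induction l; simpl; [ring|].
  rewrite IHl. ring.
Qed.

Lemma rsum_0 n f : n = 0%nat -> rsum n f = 0.
Proof. intros ->. reflexivity. Qed.

Lemma rsum_ext n f g : (forall j, (j < n)%nat -> f j = g j) -> rsum n f = rsum n g.
Proof.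
  induction n; intros H; [reflexivity|].
  rewrite !rsum_S, IHn by (intros; apply H; lia). rewrite H by lia. reflexivity.
Qed.

Lemma rsum_zero n : rsum n (fun _ => 0) = 0.
Proof. induction n; [reflexivity|]. rewrite rsum_S, IHn. ring. Qed.

Lemma rsum_plus n f g : rsum n (fun j => f j + g j) = rsum n f + rsum n g.
Proof. induction n; [unfold rsum; simpl; ring|]. rewrite !rsum_S, IHn. ring. Qed.

Lemma rsum_opp n f : - rsum n f = rsum n (fun j => - f j).
Proof. induction n; [unfold rsum; simpl; ring|]. rewrite !rsum_S, <- IHn. ring. Qed.

Lemma rsum_scal n c f : rsum n (fun j => c * f j) = c * rsum n f.
Proof. induction n; [unfold rsum; simpl; ring|]. rewrite !rsum_S, IHn. ring. Qed.

Lemma rsum_delta n k g :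
  rsum n (fun j => if Nat.eqb j k then g j else 0) = if Nat.ltb k n then g k else 0.
Proof.
  induction n; [reflexivity|]. rewrite rsum_S, IHn.
  destruct (Nat.eqb_spec n k); destruct (Nat.ltb_spec k n);
    destruct (Nat.ltb_spec k (S n)); subst; try lia; ring.
Qed.

Lemma rsum_lt k d f :
  rsum (k + d) (fun j => if Nat.ltb j k then f j else 0) = rsum k f.
Proof.
  induction d.
  - rewrite Nat.add_0_r. apply rsum_ext. intros j Hj.
    destruct (Nat.ltb_spec j k); [reflexivity | lia].
  - rewrite Nat.add_succ_r, rsum_S, IHd.
    destruct (Nat.ltb_spec (k + d) k); [lia | ring].
Qed.

Lemma is_derive_rsum n (f : nat -> R -> R) x df :
  (forall j, (j < n)%nat -> is_derive (f j) x (df j)) ->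
  is_derive (fun t => rsum n (fun j => f j t)) x (rsum n df).
Proof.
  induction n; intros H.
  - simpl. apply (is_derive_const 0 x).
  - rewrite rsum_S.
    apply is_derive_ext with (f := fun t => plus (rsum n (fun j => f j t)) (f n t)).
    { intros t. rewrite rsum_S. reflexivity. }
    apply (is_derive_plus (fun t => rsum n (fun j => f j t)) (f n)).
    + apply IHn. intros; apply H; lia.
    + apply H; lia.
Qed.

Lemma dist_eq q i j : Defs.dist equator q i j = acos (cos (q i - q j)).
Proof. unfold Defs.dist, cosdist, equator. rewrite cos_PI2, sin_PI2. f_equal. ring. Qed.

Lemma cos_sym a b : cos (a - b) = cos (b - a).
Proof. replace (a - b) with (- (b - a)) by ring. apply cos_neg. Qed.

Lemma pos_of_config c : 0 < acos c < PI -> -1 <= c <= 1 -> 0 < 1 - c^2.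
Proof.
  intros [H1 H2] Hb.
  assert (Hs : 0 < sin (acos c)) by (apply sin_gt_0; auto).
  rewrite sin_acos in Hs by auto.
  destruct (Rle_or_lt (1 - c^2) 0) as [Hn|]; [|auto].
  rewrite sqrt_neg_0 in Hs; [lra|]. unfold Rsqr. nra.
Qed.

Section Deriv.
Variables (n : nat) (m ph : nat -> R) (k : nat).
Hypothesis Hk : (k < n)%nat.
Hypothesis Hcfg : in_config n equator ph.

Definition e (x : nat) : R :=
  m k * m x * sin (ph x - ph k) / sin (acos (cos (ph k - ph x))) ^ 3.

Lemma pos_kx x : (x < n)%nat -> x <> k -> 0 < 1 - cos (ph k - ph x)^2.
Proof.
  intros Hx Hxk. apply pos_of_config; [|apply COS_bound].
  rewrite <- dist_eq. apply Hcfg; auto.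
Qed.

Lemma term_deriv i j : (i < j)%nat -> (j < n)%nat ->
  is_derive (fun t => m i * m j * cot (Defs.dist equator (upd ph k t) i j)) (ph k)
    ((if Nat.eqb i k then e j else 0) + (if Nat.eqb j k then e i else 0)).
Proof.
  intros Hij Hj.
  apply is_derive_ext with
    (f := fun t => m i * m j * cot (acos (cos (upd ph k t i - upd ph k t j)))).
  { intros t. rewrite dist_eq. reflexivity. }
  unfold upd.
  destruct (Nat.eqb_spec i k); destruct (Nat.eqb_spec j k); try lia.
  - subst i.
    apply is_derive_ext with
      (f := fun t => m k * m j * cot (acos (cos ((fun t => t - ph j) t)))).
    { intros t. reflexivity. }
    replace (e j + 0) with (m k * m j * (- sin (ph k - ph j) * 1 / sin (acos (cos (ph k - ph j)))^3)).
    2:{ unfold e. replace (ph k - ph j) with (- (ph j - ph k)) by ring.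
        rewrite sin_neg. unfold Rdiv. ring. }
    apply (is_derive_scal (fun t => cot (acos (cos ((fun t => t - ph j) t))))).
    apply (L (fun t => t - ph j) (ph k) 1).
    + auto_derive; [exact I | ring].
    + apply pos_kx; auto.
  - subst j.
    apply is_derive_ext with
      (f := fun t => m i * m k * cot (acos (cos ((fun t => ph i - t) t)))).
    { intros t. reflexivity. }
    replace (0 + e i) with (m i * m k * (- sin (ph i - ph k) * (-1) / sin (acos (cos (ph i - ph k)))^3)).
    2:{ unfold e. rewrite (cos_sym (ph i)). unfold Rdiv. ring. }
    apply (is_derive_scal (fun t => cot (acos (cos ((fun t => ph i - t) t))))).
    apply (L (fun t => ph i - t) (ph k) (-1)).
    + auto_derive; [exact I | ring].
    + rewrite cos_sym. apply pos_kx; lia.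
  - replace (0 + 0) with (@zero R_NormedModule) by (simpl; unfold zero; simpl; ring).
    apply is_derive_const.
Qed.

Lemma V_deriv :
  is_derive (fun t => Vforce n m equator (upd ph k t)) (ph k)
    (rsum n (fun j => if Nat.eqb j k then 0 else e j)).
Proof.
  unfold Vforce.
  replace (rsum n (fun j => if Nat.eqb j k then 0 else e j)) with
    (rsum n (fun j => rsum j (fun i => (if Nat.eqb i k then e j else 0) +
                                       (if Nat.eqb j k then e i else 0)))).
  2:{
    transitivity (rsum n (fun j => (if Nat.ltb k j then e j else 0) +
                                   (if Nat.eqb j k then rsum k e else 0))).
    { apply rsum_ext. intros j Hj. rewrite rsum_plus. f_equal.
      - rewrite <- (rsum_delta j k (fun _ => e j)). apply rsum_ext. intros i _. destruct (Nat.eqb i k); reflexivity.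
      - destruct (Nat.eqb_spec j k).
        + subst. apply rsum_ext. intros; reflexivity.
        + apply rsum_zero. }
    rewrite rsum_plus.
    rewrite (rsum_delta n k (fun _ => rsum k e)).
    destruct (Nat.ltb_spec k n); [|lia].
    rewrite <- (rsum_lt k (n - k) e).
    replace (k + (n - k))%nat with n by lia.
    rewrite <- rsum_plus. apply rsum_ext. intros j Hj.
    destruct (Nat.eqb_spec j k); destruct (Nat.ltb_spec k j); destruct (Nat.ltb_spec j k);
      try lia; ring. }
  apply is_derive_rsum. intros j Hj.
  apply is_derive_rsum. intros i Hi.
  apply term_deriv; lia.
Qed.

End Deriv.

Lemma crit n m ph k : fixed_point n m equator ph -> (k < n)%nat ->
  rsum n (fun j => if Nat.eqb j k then 0 else e m ph k j) = 0.
Proof.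
  intros [Hc Hd] Hk.
  destruct (Hd k Hk) as [_ H2].
  pose proof (V_deriv n m ph k Hk Hc) as H.
  apply is_derive_unique in H. apply is_derive_unique in H2. congruence.
Qed.

Lemma mat_split n (M : nat -> nat -> R) v i D :
  (i < n)%nat ->
  (forall j, Nat.eqb i j = true -> M i j = D) ->
  rsum n (fun j => M i j * v j) =
  D * v i + rsum n (fun j => if Nat.eqb j i then 0 else M i j * v j).
Proof.
  intros Hi HD.
  transitivity (rsum n (fun j => (if Nat.eqb j i then D * v i else 0) +
                                 (if Nat.eqb j i then 0 else M i j * v j))).
  - apply rsum_ext. intros j _. destruct (Nat.eqb_spec j i).
    + subst. rewrite HD by apply Nat.eqb_refl. ring.
    + ring.
  - rewrite rsum_plus, rsum_delta. destruct (Nat.ltb_spec i n); [reflexivity|lia].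
Qed.

Theorem lemma3 (n : nat) (m ph : nat -> R) :
  (3 <= n)%nat ->
  (forall i, (i < n)%nat -> 0 < m i) ->
  fixed_point n m equator ph ->
  forall i, (i < n)%nat ->
    mulv n (Hmat n m ph) (v1 ph) i = 0 /\
    mulv n (Hmat n m ph) (v2 ph) i = 0 /\
    mulv n (Gmat n m ph) v3 i = 0.
Proof.
  intros Hn Hm Hfp i Hi.
  pose proof (crit n m ph i Hfp Hi) as Hc.
  set (Dg := - rsum n (fun k => if Nat.eqb k i then 0 else Hoff m ph i k * cos (deq ph i k))).
  assert (HD : forall j, Nat.eqb i j = true -> Hmat n m ph i j = Dg).
  { intros j Hj. unfold Hmat. rewrite Hj. reflexivity. }
  assert (Hoffs : forall j, Nat.eqb j i = false -> Hmat n m ph i j = Hoff m ph i j).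
  { intros j Hj. unfold Hmat. rewrite Nat.eqb_sym, Hj. reflexivity. }
  assert (Key : forall (v : nat -> R) c,
     (forall j, (j < n)%nat -> j <> i ->
        v j - cos (deq ph i j) * v i = c * sin (ph j - ph i)) ->
     mulv n (Hmat n m ph) v i = 0).
  { intros v c Hv. unfold mulv. rewrite (mat_split n _ v i Dg Hi HD).
    unfold Dg. rewrite Ropp_mult_distr_l_reverse, Rmult_comm, <- rsum_scal.
    transitivity (rsum n (fun j => c * (if Nat.eqb j i then 0 else e m ph i j))).
    - rewrite rsum_opp, <- (rsum_plus n).
      apply rsum_ext. intros j Hj. destruct (Nat.eqb_spec j i) as [|Hji]; [ring|].
      rewrite Hoffs by (apply Nat.eqb_neq; auto).
      unfold e, Hoff, deq.
      transitivity (m i * m j / sin (acos (cos (ph i - ph j))) ^ 3 *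
                    (v j - cos (acos (cos (ph i - ph j))) * v i)); [ring|].
      pose proof (Hv j Hj Hji) as Hvj. unfold deq in Hvj. rewrite Hvj. unfold Rdiv. ring.
    - rewrite rsum_scal, Hc. ring. }
  split; [|split].
  - apply (Key _ (- sin (ph i - ph 0%nat))). intros j Hj Hji.
    unfold v1, deq. rewrite !cos_acos by apply COS_bound.
    rewrite !cos_minus, !sin_minus.
    pose proof (sin2_cos2 (ph i)) as Hsc. unfold Rsqr in Hsc.
    transitivity ((cos (ph 0%nat) * cos (ph j) + sin (ph 0%nat) * sin (ph j)) *
                    (1 - (sin (ph i) * sin (ph i) + cos (ph i) * cos (ph i))) +
                  - (sin (ph i) * cos (ph 0%nat) - cos (ph i) * sin (ph 0%nat)) *
                    (sin (ph j) * cos (ph i) - cos (ph j) * sin (ph i))); [ring|].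
    rewrite Hsc. ring.
  - apply (Key _ (cos (ph i - ph 0%nat))). intros j Hj Hji.
    unfold v2, deq. rewrite !cos_acos by apply COS_bound.
    rewrite !cos_minus, !sin_minus.
    pose proof (sin2_cos2 (ph i)) as Hsc. unfold Rsqr in Hsc.
    transitivity ((sin (ph j) * cos (ph 0%nat) - cos (ph j) * sin (ph 0%nat)) *
                    (1 - (sin (ph i) * sin (ph i) + cos (ph i) * cos (ph i))) +
                  (cos (ph i) * cos (ph 0%nat) + sin (ph i) * sin (ph 0%nat)) *
                    (sin (ph j) * cos (ph i) - cos (ph j) * sin (ph i))); [ring|].
    rewrite Hsc. ring.
  - unfold mulv.
    set (Dg' := - rsum n (fun k => if Nat.eqb k i then 0 else Goff m ph i k)).
    rewrite (mat_split n _ v3 i Dg' Hi).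
    2:{ intros j Hj. unfold Gmat. rewrite Hj. reflexivity. }
    unfold Dg', v3.
    replace (rsum n (fun j => if Nat.eqb j i then 0 else Gmat n m ph i j * 1))
      with (rsum n (fun k => if Nat.eqb k i then 0 else Goff m ph i k)).
    { ring. }
    apply rsum_ext. intros j _. destruct (Nat.eqb_spec j i) as [|Hji]; [reflexivity|].
    unfold Gmat. destruct (Nat.eqb_spec i j); [lia|]. ring.
Qed.
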